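(* Let $K\ge 2$ and let $r\in[0,1]^K$ satisfy $r(1)>r(2)>\cdots>r(K)$. Fix a sub-optimal arm $j\in\{2,\ldots,K\}$ and a temperature $\eta>0$. For a policy $\pi=\pi_\theta$ write $\varepsilon:=1-\pi(j)$ and $p_a:=\pi(a)$. There exists $\varepsilon_0(\eta)>0$ such that for all $\varepsilon\in(0,\varepsilon_0(\eta))$: if $p_1\ge\varepsilon/K$, then under the Delightful Policy Gradient (DG) flow at temperature $\eta$, \[ \dot\theta(1)-\dot\theta(j)\;\ge\;\frac{\Delta_{1j}}{8K}\,\varepsilon . \]
   Context: $K$-armed bandit: the policy is parameterized by logits $\theta\in\mathbb{R}^K$ via the softmax $\pi_\theta(a)=e^{\theta(a)}/\sum_{a'}e^{\theta(a')}$. The advantage is $U(a):=r(a)-\pi_\theta^\top r$, the surprisal is $\ell(a):=-\log\pi(a)$, and $\Delta_{ab}:=r(a)-r(b)$. With $\sigma(x)=1/(1+e^{-x})$, the DG gate is $w(a):=\sigma(U(a)\ell(a)/\eta)$ and the DG flow is $\dot\theta(a)=\sum_{a'=1}^K w(a')\,\pi(a')\,U(a')\,(\mathbf{1}\{a=a'\}-\pi(a))$. *)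

(* Defs.v *)
From mathcomp Require Import all_boot all_order all_algebra.
From mathcomp Require Import all_classical all_reals all_analysis.
Set Implicit Arguments. Unset Strict Implicit. Unset Printing Implicit Defensive.
Import Order.TTheory GRing.Theory Num.Theory.
Local Open Scope ring_scope.

Section DG.
Variables (R : realType) (K : nat).

Definition softmax (theta : 'I_K -> R) (a : 'I_K) : R :=
  expR (theta a) / \sum_(b < K) expR (theta b).

Definition adv (r theta : 'I_K -> R) (a : 'I_K) : R :=
  r a - \sum_(b < K) softmax theta b * r b.

Definition surprisal (theta : 'I_K -> R) (a : 'I_K) : R := - ln (softmax theta a).

Definition sigmoid (x : R) : R := 1 / (1 + expR (- x)).

Definition dg_gate (eta : R) (r theta : 'I_K -> R) (a : 'I_K) : R :=
  sigmoid (adv r theta a * surprisal theta a / eta).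

Definition dg_flow (eta : R) (r theta : 'I_K -> R) (a : 'I_K) : R :=
  \sum_(a' < K) dg_gate eta r theta a' * softmax theta a' * adv r theta a'
                 * ((a == a')%:R - softmax theta a).
End DG.

(* Main.v *)
Set Warnings "-all".
Require Import Defs.
From mathcomp Require Import all_boot all_order all_algebra.
From mathcomp Require Import all_classical all_reals all_analysis.
From mathcomp Require Import ring lra.
Import Order.TTheory GRing.Theory Num.Theory.
Local Open Scope ring_scope.

Section H.
Variables (R : realType) (K : nat) (hK : (0 < K)%N).

Lemma sumexp_gt0 (theta : 'I_K -> R) : 0 < \sum_(b < K) expR (theta b).
Proof.
rewrite (bigD1 (Ordinal hK)) //=; apply: ltr_pwDl; first exact: expR_gt0.
by apply: sumr_ge0 => i _; apply/ltW/expR_gt0.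
Qed.

Lemma softmax_gt0 (theta : 'I_K -> R) a : 0 < softmax theta a.
Proof. by rewrite /softmax divr_gt0 ?expR_gt0 ?sumexp_gt0. Qed.

Lemma softmax_sum (theta : 'I_K -> R) : \sum_(b < K) softmax theta b = 1.
Proof.
rewrite /softmax -mulr_suml divff //; exact: lt0r_neq0 (sumexp_gt0 theta).
Qed.

Lemma sigmoid_gt0 (x : R) : 0 < sigmoid x.
Proof. by rewrite /sigmoid divr_gt0 // addr_gt0 ?expR_gt0. Qed.

Lemma sigmoid_le1 (x : R) : sigmoid x <= 1.
Proof.
rewrite /sigmoid ler_pdivrMr ?addr_gt0 ?expR_gt0 // mul1r lerDl; exact/ltW/expR_gt0.
Qed.

Lemma sigmoid_ge_half (x : R) : 0 <= x -> 1/2 <= sigmoid x.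
Proof.
move=> hx; rewrite /sigmoid ler_pdivlMr ?addr_gt0 ?expR_gt0 //.
have : expR (- x) <= 1 by rewrite -expR0 ler_expR lerNl oppr0.
lra.
Qed.

Lemma sigmoid_neg (x : R) : x < 0 -> sigmoid x * (- x) <= 1.
Proof.
move=> hx; rewrite /sigmoid mul1r ler_pdivrMl ?addr_gt0 ?expR_gt0 // mulr1.
have := expR_ge1Dx (- x); lra.
Qed.

Lemma flow_eq (eta : R) (r theta : 'I_K -> R) a :
  dg_flow eta r theta a =
  dg_gate eta r theta a * softmax theta a * adv r theta a
  - softmax theta a * \sum_(b < K) dg_gate eta r theta b * softmax theta b * adv r theta b.
Proof.
rewrite /dg_flow.
under eq_bigr => i _ do rewrite mulrBr.
rewrite sumrB (bigD1 a) //= eqxx mulr1 big1 ?addr0; last first.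
  by move=> i /negbTE; rewrite eq_sym => ->; rewrite mulr0.
by rewrite mulr_sumr; congr (_ - _); apply: eq_bigr => i _; rewrite mulrC.
Qed.

Lemma lin_aux (G1 Gj S X pi pj be : R) :
  be * S = pj * S - pi * S -> Gj + X = be * S ->
  G1 - pi * S - (Gj - pj * S) = G1 + X.
Proof. move=> h1 h2; lra. Qed.

Lemma albe (e pi pj : R) : 0 < e -> e < 1/2 -> 0 < pi -> pi <= e -> e = 1 - pj ->
  0 <= e + pi /\ e + pi <= 2 * e /\ 0 <= pj - pi /\ pj - pi <= 1 /\ 0 < 1 - e.
Proof. move=> *; split; [|split; [|split; [|split]]]; lra. Qed.

Lemma term_bound (pa Ua wa wj al be eps m : R) : 0 < pa -> -1 <= Ua <= 1 ->
  0 < wa <= 1 -> 0 < wj <= 1 -> 0 <= al -> al <= 2 * eps -> 0 <= be -> be <= 1 ->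
  0 <= m -> (Ua < 0 -> -Ua * wa <= m) ->
  - ((2 * eps + m) * pa) <= pa * Ua * (al * wj + be * wa).
Proof.
move=> hpa /andP[hu1 hu2] /andP[hwa0 hwa1] /andP[hwj0 hwj1] ha0 ha2 hb0 hb1 hm hneg.
case: (leP 0 Ua) => hUa.
  have : 0 <= pa * Ua * (al * wj + be * wa).
    apply: mulr_ge0; first by apply: mulr_ge0 => //; exact: ltW.
    by apply: addr_ge0; apply: mulr_ge0 => //; exact: ltW.
  have : 0 <= (2 * eps + m) * pa.
    apply: mulr_ge0; last exact: ltW.
    have : 0 <= eps by nra.
    lra.
  lra.
have h1 := hneg hUa.
have h2 : - (2 * eps) <= Ua * (al * wj).
  have ha1 : 0 <= al * wj by apply: mulr_ge0 => //; exact: ltW.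
  have ha3 : al * wj <= 2 * eps by nra.
  nra.
have h3 : - m <= be * (Ua * wa).
  have : Ua * wa <= 0 by nra.
  nra.
have -> : pa * Ua * (al * wj + be * wa)
    = pa * (Ua * (al * wj) + be * (Ua * wa)) by ring.
have : - (2 * eps + m) <= Ua * (al * wj) + be * (Ua * wa) by lra.
nra.
Qed.

Lemma final_aux (eps q G1 PU X : R) : 0 < eps -> eps < 1/2 -> eps < q/32 ->
  0 < q -> eps * (1 - eps) * q <= PU -> 1/2 * PU <= G1 ->
  - ((2 * eps + q / 16) * eps) <= X -> q / 8 * eps <= G1 + X.
Proof.
move=> h0 h1 h2 hq hPU hG hX.
have hqe : q * eps <= q / 2 by nra.
have : 0 <= eps * (5 * q / 16 - q * eps / 2 - 2 * eps).
  by apply: mulr_ge0; lra.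
nra.
Qed.

End H.

Theorem theorem2 (R : realType) (K : nat) (hK : (2 <= K)%N)
  (r : 'I_K -> R)
  (hr01 : forall a : 'I_K, 0 <= r a <= 1)
  (hrdec : forall a b : 'I_K, (a < b)%N -> r b < r a)
  (i1 : 'I_K) (hi1 : nat_of_ord i1 = 0%N)
  (j : 'I_K) (hj : (0 < j)%N)
  (eta : R) (heta : 0 < eta) :
  exists eps0 : R, 0 < eps0 /\
    forall theta : 'I_K -> R,
      let eps := 1 - softmax theta j in
      0 < eps -> eps < eps0 ->
      eps / K%:R <= softmax theta i1 ->
      (r i1 - r j) / (8 * K%:R) * eps
        <= dg_flow eta r theta i1 - dg_flow eta r theta j.
Proof.
have hK0 : (0 < K)%N by exact: (leq_trans _ hK).
have hk : 0 < (K%:R : R) by rewrite ltr0n.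
set k := (K%:R : R) in hk *.
have hD : 0 < r i1 - r j by rewrite subr_gt0; apply: hrdec; rewrite hi1.
set D := r i1 - r j in hD *.
set q := D / k.
have hq : 0 < q by rewrite divr_gt0.
set M := 16 * eta / q.
have hM : 0 < M by rewrite /M divr_gt0 // mulr_gt0.
exists (Num.min (1/2) (Num.min (q/32) (expR (- M)))).
split.
  by rewrite !lt_min !divr_gt0 ?expR_gt0.
move=> theta eps he0 heps hp1.
move: heps; rewrite !lt_min => /andP[he1 /andP[he2 he3]].
have hi1j : i1 != j.
  by apply/eqP => h; move: hj; rewrite -h hi1.
set p := softmax theta.
have hp : forall a, 0 < p a by move=> a; exact: softmax_gt0.
have hps : \sum_(b < K) p b = 1 by exact: softmax_sum.
have heq : eps = 1 - p j by [].
have hpo : forall a, a != j -> p a <= eps.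
  move=> a haj; rewrite heq; move: hps; rewrite (bigD1 j) //= (bigD1 a) //=.
  have : 0 <= \sum_(i < K | (i != j) && (i != a)) p i.
    by apply: sumr_ge0 => i _; exact/ltW.
  lra.
have hpnj : \sum_(a < K | a != j) p a = eps.
  by rewrite heq; move: hps; rewrite (bigD1 j) //=; lra.
set c := \sum_(b < K) p b * r b.
have hc : 0 <= c <= 1.
  apply/andP; split; first by apply: sumr_ge0 => i _; have := hp i; have := hr01 i; nra.
  rewrite -hps; apply: ler_sum => i _; have := hp i; have := hr01 i; nra.
set U := adv r theta.
have hU : forall a, U a = r a - c by [].
have hUb : forall a, -1 <= U a <= 1.
  by move=> a; rewrite hU; have := hr01 a; move: hc; lra.
have hpU : \sum_(a < K) p a * U a = 0.
  under eq_bigr do rewrite hU mulrBr.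
  by rewrite sumrB -mulr_suml hps mul1r subrr.
have hU1 : (1 - eps) * D <= U i1.
  have -> : U i1 = \sum_(b < K) p b * (r i1 - r b).
    under eq_bigr do rewrite mulrBr.
    by rewrite sumrB -mulr_suml hps mul1r hU.
  rewrite (bigD1 j) //= -/D.
  have : 0 <= \sum_(i < K | i != j) p i * (r i1 - r i).
    apply: sumr_ge0 => b _; apply: mulr_ge0; first exact/ltW.
    case: (eqVneq b i1) => [->|hb]; first by rewrite subrr.
    rewrite subr_ge0; apply/ltW/hrdec; rewrite hi1 lt0n; apply/eqP => h.
    by move/eqP: hb; apply; apply: val_inj; rewrite /= h hi1.
  rewrite heq mulrC; lra.
set w := dg_gate eta r theta.
have hw : forall a, 0 < w a <= 1.
  by move=> a; rewrite /w /dg_gate sigmoid_gt0 sigmoid_le1.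
have hp1le : p i1 <= eps by exact: hpo.
have hw1 : 1/2 <= w i1.
  apply: sigmoid_ge_half; apply: mulr_ge0; last by rewrite invr_ge0 ltW.
  apply: mulr_ge0.
    have : 0 <= (1 - eps) * D by apply: mulr_ge0; lra.
    rewrite -/U; move: hU1; lra.
  rewrite /surprisal oppr_ge0; apply: ln_le0; rewrite -/p; lra.
have hlog : forall a, a != j -> M <= surprisal theta a.
  move=> a haj; rewrite /surprisal -/p.
  have h1 : ln (p a) <= ln eps.
    by rewrite ler_ln ?posrE ?hp ?hpo.
  have h2 : ln eps < ln (expR (- M)).
    by rewrite ltr_ln ?posrE ?expR_gt0.
  move: h2; rewrite expRK; lra.
have hneg : forall a, a != j -> U a < 0 -> - U a * w a <= eta / M.
  move=> a haj hUa.
  have hl := hlog a haj.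
  have hz : U a * surprisal theta a / eta < 0.
    by rewrite pmulr_llt0 ?invr_gt0 // nmulr_rlt0 //; lra.
  have := @sigmoid_neg R _ hz; rewrite -/(dg_gate eta r theta a) -/w => hs.
  rewrite ler_pdivlMr //.
  have hsl : - U a * w a * surprisal theta a <= eta.
    have -> : - U a * w a * surprisal theta a = eta * (w a * - (U a * surprisal theta a / eta)).
      by field; rewrite gt_eqF.
    by rewrite -[X in _ <= X]mulr1 ler_pM2l.
  have := hw a; nra.
rewrite !flow_eq -/p -/U -/w.
set S := \sum_(b < K) w b * p b * U b.
set al := eps + p i1.
set be := p j - p i1.
have hal : al + be = 1 by rewrite /al /be heq; ring.
have Ht : \sum_(a < K) p a * U a * (al * w j + be * w a)
    = al * w j * (\sum_(a < K) p a * U a) + be * S.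
  by rewrite !mulr_sumr -big_split /=; apply: eq_bigr => a _; ring.
rewrite hpU mulr0 add0r (bigD1 j) //= in Ht.
set X := \sum_(a < K | a != j) p a * U a * (al * w j + be * w a) in Ht.
have hGj : p j * U j * (al * w j + be * w j) = w j * p j * U j.
  by rewrite -mulrDl hal mul1r; ring.
rewrite hGj in Ht.
have hbS : be * S = p j * S - p i1 * S by rewrite /be mulrBl.
have -> : w i1 * p i1 * U i1 - p i1 * S - (w j * p j * U j - p j * S)
    = w i1 * p i1 * U i1 + X by exact: lin_aux hbS Ht.
have [hal0 [hal2 [hbe0 [hbe1 he1']]]] :=
  @albe R _ _ _ he0 he1 (hp i1) hp1le heq.
have hX : - ((2 * eps + eta / M) * \sum_(a < K | a != j) p a) <= X.
  rewrite mulr_sumr -sumrN; apply: ler_sum => a haj.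
  apply: (@term_bound R _ _ _ _ _ _ _ _ (hp a) (hUb a) (hw a) (hw j) hal0 hal2 hbe0 hbe1 _ (hneg a haj)).
  by rewrite divr_ge0 // ltW.
rewrite hpnj in hX.
have hU1' : 0 <= (1 - eps) * D by apply: mulr_ge0 => //; exact: ltW.
have hG : eps / k * ((1 - eps) * D) <= p i1 * U i1.
  by apply: ler_pM => //; rewrite divr_ge0 // ltW.
have hpU1 : 0 <= p i1 * U i1.
  by apply: mulr_ge0; [exact: ltW | exact: le_trans hU1' hU1].
have hG2 : (1/2) * (p i1 * U i1) <= w i1 * p i1 * U i1.
  by rewrite -[w i1 * p i1 * U i1]mulrA; apply: ler_wpM2r.
have e1 : eps / k * ((1 - eps) * D) = eps * (1 - eps) * q.
  by rewrite /q; field; rewrite gt_eqF.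
have e2 : D / (8 * k) = q / 8 by rewrite /q; field; rewrite gt_eqF.
have e3 : eta / M = q / 16.
  by rewrite /M; field; rewrite ?gt_eqF.
rewrite e2; rewrite e1 in hG; rewrite e3 in hX.
exact: (@final_aux R _ _ _ _ _ he0 he1 he2 hq hG hG2 hX).
Qed.
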